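(* Let $\mathfrak{g}$ be a finite-dimensional complete Lie algebra over a field $K$ of characteristic zero. Then every CPA-structure on $\mathfrak{g}$ is inner.
   Context: A Lie algebra is complete if its center is trivial and all its derivations are inner. A CPA-structure on $\mathfrak{g}$ is a bilinear product $x\cdot y$ satisfying, for all $x,y,z$: $x\cdot y=y\cdot x$; $[x,y]\cdot z=x\cdot(y\cdot z)-y\cdot(x\cdot z)$; $x\cdot[y,z]=[x\cdot y,z]+[y,x\cdot z]$. It is inner if $x\cdot y=[\phi(x),y]$ for all $x,y$ for some Lie algebra homomorphism $\phi:\mathfrak{g}\to\mathfrak{g}$. *)

(* Defs.v *)
From HB Require Import structures.
From mathcomp Require Import all_boot all_order all_algebra.
Set Implicit Arguments. Unset Strict Implicit. Unset Printing Implicit Defensive.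
Import GRing.Theory.
Local Open Scope ring_scope.

(* A finite-dimensional Lie algebra over K is modelled as a finite-dimensional
   K-vector space V (a vectType K) together with a bracket br : V -> V -> V. *)

Section LieDefs.
Variables (K : fieldType) (V : vectType K).

Definition is_linear_map (f : V -> V) : Prop :=
  forall (a : K) (x y : V), f (a *: x + y) = a *: f x + f y.

Definition is_bilinear (m : V -> V -> V) : Prop :=
  (forall (a : K) (x y z : V), m (a *: x + y) z = a *: m x z + m y z) /\
  (forall (a : K) (x y z : V), m z (a *: x + y) = a *: m z x + m z y).

Definition is_lie_bracket (br : V -> V -> V) : Prop :=
  [/\ is_bilinear br,
      (forall x : V, br x x = 0) &
      (forall x y z : V, br x (br y z) + br y (br z x) + br z (br x y) = 0)].

Definition trivial_center (br : V -> V -> V) : Prop :=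
  forall z : V, (forall x : V, br z x = 0) -> z = 0.

Definition is_derivation (br : V -> V -> V) (D : V -> V) : Prop :=
  is_linear_map D /\ forall x y : V, D (br x y) = br (D x) y + br x (D y).

Definition is_inner_derivation (br : V -> V -> V) (D : V -> V) : Prop :=
  exists a : V, forall x : V, D x = br a x.

Definition complete_lie (br : V -> V -> V) : Prop :=
  trivial_center br /\
  forall D : V -> V, is_derivation br D -> is_inner_derivation br D.

Definition is_lie_hom (br : V -> V -> V) (phi : V -> V) : Prop :=
  is_linear_map phi /\ forall x y : V, phi (br x y) = br (phi x) (phi y).

Definition is_CPA (br : V -> V -> V) (p : V -> V -> V) : Prop :=
  [/\ is_bilinear p,
      (forall x y : V, p x y = p y x),
      (forall x y z : V, p (br x y) z = p x (p y z) - p y (p x z)) &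
      (forall x y z : V, p x (br y z) = br (p x y) z + br y (p x z))].

Definition is_inner_CPA (br : V -> V -> V) (p : V -> V -> V) : Prop :=
  exists phi : V -> V, is_lie_hom br phi /\ forall x y : V, p x y = br (phi x) y.

End LieDefs.

(* Main.v *)
Require Import Defs.
From mathcomp Require Import all_boot all_order all_algebra.
From Stdlib Require Import ClassicalEpsilon.
Local Open Scope ring_scope.
Import GRing.Theory.

Section Aux.
Variables (K : fieldType) (V : vectType K) (br : V -> V -> V).
Hypothesis Hb : is_bilinear br.

Lemma brDl u v w : br (u + v) w = br u w + br v w.
Proof. by have := Hb.1 1 u v w; rewrite !scale1r. Qed.
Lemma brDr u v w : br w (u + v) = br w u + br w v.
Proof. by have := Hb.2 1 u v w; rewrite !scale1r. Qed.
Lemma brNl u w : br (- u) w = - br u w.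
Proof.
have := Hb.1 (-1) u 0 w; rewrite !scaleN1r addr0 => ->.
have : br 0 w = 0.
  by have := Hb.1 (-1) 0 0 w; rewrite scaler0 addr0 scaleN1r addNr.
by move=> ->; rewrite addr0.
Qed.
Lemma brBl u v w : br (u - v) w = br u w - br v w.
Proof. by rewrite brDl brNl. Qed.
Lemma brZl a u w : br (a *: u) w = a *: br u w.
Proof.
have := Hb.1 a u 0 w; rewrite addr0 => ->.
have : br 0 w = 0.
  by have := Hb.1 (-1) 0 0 w; rewrite scaler0 addr0 scaleN1r addNr.
by move=> ->; rewrite addr0.
Qed.
End Aux.

Theorem corollary2p9 (K : fieldType) (V : vectType K) (br : V -> V -> V)
  (charK : [pchar K] =i pred0)
  (Hlie : is_lie_bracket br) (Hcomplete : complete_lie br)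
  (p : V -> V -> V) (Hp : is_CPA br p) :
  is_inner_CPA br p.
Proof.
case: Hlie => Hb Halt Hjac.
case: Hcomplete => Hcen Hder.
case: Hp => Hpb Hpc Hp1 Hp2.
have uniq : forall a b : V, (forall y, br a y = br b y) -> a = b.
  move=> a b H; apply/eqP; rewrite -subr_eq0; apply/eqP; apply: Hcen => x.
  by rewrite (@brBl _ _ _ Hb) H subrr.
have anti : forall u v, br u v = - br v u.
  move=> u v; have := Halt (u + v).
  rewrite (@brDl _ _ _ Hb) !(@brDr _ _ _ Hb) !Halt add0r addr0 => /eqP.
  by rewrite addr_eq0 => /eqP.
have der : forall x, is_derivation br (p x).
  move=> x; split; last by move=> y z; exact: (Hp2 x y z).
  by move=> a y z; exact: (Hpb.2 a y z x).
have cid1 : forall x, {a : V | forall y, p x y = br a y}.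
  move=> x; apply: constructive_indefinite_description.
  exact: (Hder (p x) (der x)).
have [phi Hphi] : exists phi : V -> V, forall x y, p x y = br (phi x) y.
  by exists (fun x => proj1_sig (cid1 x)) => x; exact: (proj2_sig (cid1 x)).
exists phi; split => //; split.
- move=> a x y; apply: uniq => z.
  by rewrite -Hphi Hpb.1 !Hphi (@brDl _ _ _ Hb) (@brZl _ _ _ Hb).
- move=> x y; apply: uniq => z.
  rewrite -Hphi Hp1 !Hphi.
  have J := Hjac (phi x) (phi y) z.
  have brNr : forall u w, br w (- u) = - br w u.
    by move=> u w; rewrite anti (@brNl _ _ _ Hb) anti opprK.
  rewrite (anti (phi y) (br z (phi x))) (anti z (phi x)) (@brNl _ _ _ Hb) opprK in J.
  rewrite (anti (br (phi x) (phi y)) z).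
  apply/eqP; rewrite -addr_eq0; apply/eqP.
  rewrite -J; congr (_ + _ + _).
  by rewrite (anti (br (phi x) z)).
Qed.
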